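(* Let $X$ be a nonempty set, let $w$ be a metric modular on $X$, let $x_0\in X$ and let $X_w^*=\{x\in X:\exists\,\lambda>0,\ w_\lambda(x,x_0)<\infty\}$. Let $T\colon X_w^*\to X_w^*$ be a map and let $k\in(0,1)$, $\lambda_0>0$ be such that $w_{k\lambda}(Tx,Ty)\le k\,w_\lambda(x,y)$ for all $0<\lambda\le\lambda_0$ and all $x,y\in X_w^*$. Let $0<\lambda<\lambda_0$ and let $\lambda_1,\lambda_2>0$ with $\lambda_1+\lambda_2=(1-k)\lambda$. Then $$w_\lambda(x,y)\le \frac{w_{\lambda_1}(x,Tx)+w_{\lambda_2}(y,Ty)}{1-k}$$ for every $x,y\in X_w^*$ such that $w_\lambda(x,y)<\infty$.
   Context: A metric modular on a nonempty set $X$ is a function $w\colon(0,\infty)\times X\times X\to[0,\infty]$, written $(\lambda,x,y)\mapsto w_\lambda(x,y)$, such that for all $x,y,z\in X$: (1) $w_\lambda(x,y)=0$ for all $\lambda>0$ if and only if $x=y$; (2) $w_\lambda(x,y)=w_\lambda(y,x)$ for all $\lambda>0$; (3) $w_{\lambda+\mu}(x,y)\le w_\lambda(x,z)+w_\mu(y,z)$ for all $\lambda,\mu>0$. Arithmetic is in $[0,\infty]$. *)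

(* Defs.v *)
From HB Require Import structures.
From mathcomp Require Import all_boot all_order all_algebra.
From mathcomp Require Import all_classical all_reals.
From mathcomp Require Export constructive_ereal.
Set Implicit Arguments. Unset Strict Implicit. Unset Printing Implicit Defensive.
Import Order.TTheory GRing.Theory Num.Theory.
Local Open Scope ring_scope.
Local Open Scope ereal_scope.

(* A metric modular on X: w : (0,oo) x X x X -> [0,oo]; we take w defined on
   all of R but only constrain it for lambda > 0. *)
Definition metric_modular (R : realType) (X : Type) (w : R -> X -> X -> \bar R) : Prop :=
  (forall l x y, (0 < l)%R -> 0 <= w l x y) /\
  (forall x y, (forall l, (0 < l)%R -> w l x y = 0) <-> x = y) /\
  (forall l x y, (0 < l)%R -> w l x y = w l y x) /\
  (forall l m x y z, (0 < l)%R -> (0 < m)%R -> w (l + m)%R x y <= w l x z + w m y z).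

Definition modular_space (R : realType) (X : Type) (w : R -> X -> X -> \bar R) (x0 : X)
  : X -> Prop :=
  fun x => exists l : R, (0 < l)%R /\ w l x x0 < +oo.

(* Main.v *)
Require Import Defs.
From HB Require Import structures.
From mathcomp Require Import all_boot all_order all_algebra.
From mathcomp Require Import all_classical all_reals.
From mathcomp Require Import ring lra.
Import Order.TTheory GRing.Theory Num.Theory.
Local Open Scope ring_scope.
Local Open Scope ereal_scope.

Theorem proposition4p5 (R : realType) (X : Type) (w : R -> X -> X -> \bar R) (x0 : X)
  (T : X -> X) (k lambda0 : R) :
  metric_modular w ->
  (forall x, modular_space w x0 x -> modular_space w x0 (T x)) ->
  (0 < k < 1)%R -> (0 < lambda0)%R ->
  (forall l x y, (0 < l)%R -> (l <= lambda0)%R ->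
     modular_space w x0 x -> modular_space w x0 y ->
     w (k * l)%R (T x) (T y) <= k%:E * w l x y) ->
  forall lambda l1 l2 : R, (0 < lambda)%R -> (lambda < lambda0)%R ->
  (0 < l1)%R -> (0 < l2)%R -> (l1 + l2 = (1 - k) * lambda)%R ->
  forall x y, modular_space w x0 x -> modular_space w x0 y ->
  w lambda x y < +oo ->
  w lambda x y <= (w l1 x (T x) + w l2 y (T y)) * ((1 - k)^-1)%:E.
Proof.
move=> [w0 [_ [wsym wtri]]] Tsp /andP[k0 k1] l00 Hc lambda l1 l2 lam0 laml l10 l20 hl
  x y sx sy wfin.
have kl0 : (0 < k * lambda)%R by apply: mulr_gt0.
have e1 : lambda = (l1 + (k * lambda + l2))%R.
  have -> : (l1 + (k * lambda + l2) = (l1 + l2) + k * lambda)%R by ring.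
  rewrite hl; ring.
have h1 : w lambda x y <= w l1 x (T x) + w (k * lambda + l2)%R y (T x).
  by rewrite {1}e1; apply: wtri => //; apply: addr_gt0.
have h2 : w (k * lambda + l2)%R y (T x) <= w (k*lambda)%R (T x) (T y) + w l2 y (T y).
  rewrite wsym; last by apply: addr_gt0.
  by apply: wtri.
have h3 : w (k*lambda)%R (T x) (T y) <= k%:E * w lambda x y.
  by apply: Hc => //; apply: ltW.
have hW0 := w0 _ x y lam0.
have hA0 := w0 _ x (T x) l10.
have hB0 := w0 _ y (T y) l20.
have key : w lambda x y <= (w l1 x (T x) + w l2 y (T y)) + k%:E * w lambda x y.
  apply: (le_trans h1).
  rewrite -addeA; apply: leeD2l.
  apply: (le_trans h2).
  rewrite addeC; exact: leeD2r.
move: key hW0 wfin hA0 hB0.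
case: (w lambda x y) => [r| |] //= key r0 _.
case: (w l1 x (T x)) key => [a| |] //=; case: (w l2 y (T y)) => [b| |] //=.
- move=> key a0 b0; rewrite -EFinD -EFinM lee_fin.
  rewrite -EFinM -!EFinD lee_fin in key.
  rewrite lee_fin in a0 b0 r0.
  have hk : (0 < 1 - k)%R by rewrite subr_gt0.
  rewrite ler_pdivlMr //; nra.
- move=> _ _ _; rewrite addey // mulr_infty gtr0_sg ?invr_gt0 ?subr_gt0 // mul1e; exact: leey.
- move=> _ _ _; rewrite addye // mulr_infty gtr0_sg ?invr_gt0 ?subr_gt0 // mul1e; exact: leey.
- move=> _ _ _; rewrite addye // mulr_infty gtr0_sg ?invr_gt0 ?subr_gt0 // mul1e; exact: leey.
Qed.
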